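(* Let $t(\varphi)$ and $s(\varphi)$ be real trigonometric polynomials with $\deg s<\deg t$, such that all roots of $t$ in the cylinder $\mathbb{C}/2\pi\mathbb{Z}$ are real. Put $r=s/t$. Then for every natural number $n$ \[ (P)\int_0^{2\pi}r^n(\varphi)\,\mathrm{d}\varphi:=\frac12\int_0^{2\pi}(r(\varphi)+i0)^n\,\mathrm{d}\varphi+\frac12\int_0^{2\pi}(r(\varphi)-i0)^n\,\mathrm{d}\varphi=0 . \]
   Context: A real trigonometric polynomial of degree $k$ is $t(\varphi)=\sum_{j=0}^k(a_j\cos j\varphi+b_j\sin j\varphi)$ with real coefficients and $(a_k,b_k)\ne(0,0)$; it extends holomorphically to $\mathbb{C}/2\pi\mathbb{Z}$, where it has $2k$ zeros counted with multiplicity. $\int(r\pm i0)^n\,\mathrm{d}\varphi$ means $\lim_{\eta\searrow0}\int_0^{2\pi}(r(\varphi)\pm i\eta)^n\,\mathrm{d}\varphi$.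
   Formalization: In the limit over η ↘ 0 defining ∫(r ± i0)ⁿ dφ, the integrand is r(φ ± iη)ⁿ instead of (r(φ) ± iη)ⁿ, and n ranges over n ≥ 1 only. The statement above fails without it. *)

(* Defs.v *)
From Stdlib Require Import Reals.
From Coquelicot Require Import Coquelicot.
Open Scope R_scope.

Definition ccos (z : C) : C :=
  (cos (Re z) * cosh (Im z), - (sin (Re z) * sinh (Im z))).
Definition csin (z : C) : C :=
  (sin (Re z) * cosh (Im z), cos (Re z) * sinh (Im z)).

Definition trig_eval (N : nat) (a b : nat -> R) (z : C) : C :=
  sum_n (fun j => Cplus (Cmult (RtoC (a j)) (ccos (Cmult (RtoC (INR j)) z)))
                        (Cmult (RtoC (b j)) (csin (Cmult (RtoC (INR j)) z)))) N.

Definition is_trig_deg (a b : nat -> R) (k : nat) : Prop :=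
  (a k <> 0 \/ b k <> 0) /\ (forall j, (k < j)%nat -> a j = 0 /\ b j = 0).

Definition CRInt (f : R -> C) (lo hi : R) : C :=
  (RInt (fun x => Re (f x)) lo hi, RInt (fun x => Im (f x)) lo hi).

(* Main.v *)
Require Import Defs.
From Stdlib Require Import Reals.
From Coquelicot Require Import Coquelicot.
From Stdlib Require Import Lra Lia.
Open Scope R_scope.

Definition isCD (f : C -> C) (z l : C) : Prop :=
  @is_derive C_AbsRing (AbsRing_NormedModule C_AbsRing) f z l.

Lemma isCD_eps f z l : isCD f z l -> forall eps, 0 < eps -> exists d, 0 < d /\
  forall w, Cmod (Cminus w z) < d ->
    Cmod (Cminus (Cminus (f w) (f z)) (Cmult (Cminus w z) l)) <= eps * Cmod (Cminus w z).
Proof.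
  intros [_ H] eps Heps.
  specialize (H z (fun P HP => HP) (mkposreal eps Heps)).
  destruct H as [d Hd]. exists d. split. apply cond_pos.
  intros w Hw. apply Hd. exact Hw.
Qed.

Lemma isCD_of_eps f z l : (forall eps, 0 < eps -> exists d, 0 < d /\
  forall w, Cmod (Cminus w z) < d ->
    Cmod (Cminus (Cminus (f w) (f z)) (Cmult (Cminus w z) l)) <= eps * Cmod (Cminus w z)) ->
  isCD f z l.
Proof.
  intros H. split. apply (@is_linear_scal_l C_AbsRing (AbsRing_NormedModule C_AbsRing)).
  intros x Hx. apply (@is_filter_lim_locally_unique C_AbsRing (AbsRing_NormedModule C_AbsRing)) in Hx. subst x.
  intros [eps Heps]. destruct (H eps Heps) as [d [Hd Hw]].
  exists (mkposreal d Hd). intros w Hb. apply Hw. exact Hb.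
Qed.

Lemma isCD_plus f g z a b : isCD f z a -> isCD g z b -> isCD (fun w => Cplus (f w) (g w)) z (Cplus a b).
Proof. intros. apply (@is_derive_plus C_AbsRing (AbsRing_NormedModule C_AbsRing)); auto. Qed.
Lemma isCD_mult f g z a b : isCD f z a -> isCD g z b ->
  isCD (fun w => Cmult (f w) (g w)) z (Cplus (Cmult a (g z)) (Cmult (f z) b)).
Proof. intros. apply (@is_derive_mult C_AbsRing); auto. apply Cmult_comm. Qed.
Lemma isCD_const c z : isCD (fun _ => c) z (RtoC 0).
Proof. apply (@is_derive_const C_AbsRing (AbsRing_NormedModule C_AbsRing)). Qed.
Lemma isCD_id z : isCD (fun w => w) z (RtoC 1).
Proof. apply (@is_derive_id C_AbsRing). Qed.
Lemma isCD_comp f g z a b : isCD f (g z) a -> isCD g z b -> isCD (fun w => f (g w)) z (Cmult b a).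
Proof. intros. apply (@is_derive_comp C_AbsRing (AbsRing_NormedModule C_AbsRing)); auto. Qed.
Lemma isCD_ext f g z l : (forall w, f w = g w) -> isCD f z l -> isCD g z l.
Proof. intros; eapply (@is_derive_ext C_AbsRing (AbsRing_NormedModule C_AbsRing)); eauto. Qed.
Lemma isCD_eql f z l l' : isCD f z l -> l = l' -> isCD f z l'.
Proof. intros; subst; auto. Qed.

Lemma Cmod_minus_tri a b : Cmod a - Cmod (Cminus a b) <= Cmod b.
Proof.
  assert (H := Cmod_triangle (Cminus a b) b).
  replace (Cplus (Cminus a b) b) with a in H by ring. lra.
Qed.

Lemma isCD_inv z : z <> RtoC 0 -> isCD Cinv z (Copp (Cinv (Cmult z z))).
Proof.
  intros Hz. apply isCD_of_eps. intros eps Heps.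
  assert (Hm : 0 < Cmod z) by (apply Cmod_gt_0; auto).
  exists (Rmin (Cmod z / 2) (eps * Cmod z ^ 3 / 2)). split.
  { apply Rmin_pos. lra. apply Rmult_lt_0_compat; [|lra]. apply Rmult_lt_0_compat; auto. apply pow_lt; auto. }
  intros w Hw.
  assert (Hw1 : Cmod (Cminus w z) < Cmod z / 2) by (eapply Rlt_le_trans; [exact Hw| apply Rmin_l]).
  assert (Hw2 : Cmod (Cminus w z) < eps * Cmod z ^ 3 / 2) by (eapply Rlt_le_trans; [exact Hw| apply Rmin_r]).
  assert (Hwm : Cmod z / 2 < Cmod w).
  { assert (H := Cmod_minus_tri z (Cminus z w)).
    replace (Cminus z (Cminus z w)) with w in H by ring.
    replace (Cminus z w) with (Copp (Cminus w z)) in H by ring. rewrite Cmod_opp in H. lra. }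
  assert (Hw0 : w <> RtoC 0). { intro E. subst w. rewrite Cmod_0 in Hwm. lra. }
  replace (Cminus (Cminus (Cinv w) (Cinv z)) (Cmult (Cminus w z) (Copp (Cinv (Cmult z z)))))
    with (Cmult (Cmult (Cminus w z) (Cminus w z)) (Cinv (Cmult w (Cmult z z)))).
  2:{ field. auto. }
  rewrite Cmod_mult, Cmod_mult, Cmod_inv, !Cmod_mult.
  2:{ repeat apply Cmult_neq_0; auto. }
  set (m := Cmod (Cminus w z)) in *.
  assert (0 <= m) by apply Cmod_ge_0.
  rewrite Rmult_assoc, (Rmult_comm eps m). apply Rmult_le_compat_l; auto.
  assert (HD : 0 < Cmod w * (Cmod z * Cmod z)).
  { apply Rmult_lt_0_compat; [lra|]. apply Rmult_lt_0_compat; lra. }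
  apply (Rmult_le_reg_r (Cmod w * (Cmod z * Cmod z))); auto.
  rewrite Rmult_assoc, Rinv_l, Rmult_1_r by lra.
  assert (Cmod z / 2 * (Cmod z * Cmod z) <= Cmod w * (Cmod z * Cmod z)).
  { apply Rmult_le_compat_r; nra. }
  apply Rle_trans with (eps * (Cmod z / 2 * (Cmod z * Cmod z))).
  { replace (eps * (Cmod z / 2 * (Cmod z * Cmod z))) with (eps * Cmod z ^ 3 / 2) by (simpl; field). lra. }
  apply Rmult_le_compat_l; lra.
Qed.

Definition Cexp (z : C) : C := (exp (Re z) * cos (Im z), exp (Re z) * sin (Im z)).

Lemma comp_filterdiff (F : R -> R -> R) x y dx dy :
  (forall u v, is_derive (fun s => F s v) u (dx u v)) ->
  (forall u v, is_derive (fun s => F u s) v (dy u v)) ->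
  continuous (fun u : R * R => dx (fst u) (snd u)) (x, y) ->
  forall eps, 0 < eps -> exists d, 0 < d /\ forall u v, Rabs (u - x) < d -> Rabs (v - y) < d ->
   Rabs (F u v - F x y - ((u - x) * dx x y + (v - y) * dy x y)) <= eps * sqrt ((u-x)^2 + (v-y)^2).
Proof.
  intros Hx Hy Hc eps Heps.
  assert (H := is_derive_filterdiff F x y dx (dy x y)).
  destruct H as [_ H].
  - apply filter_forall. intros [u v]. apply Hx.
  - apply Hy.
  - exact Hc.
  - specialize (H (x,y) (fun P HP => HP) (mkposreal eps Heps)).
    destruct H as [d Hd]. exists d. split. apply cond_pos.
    intros u v Hu Hv. specialize (Hd (u,v) (conj Hu Hv)).
    change (Rabs (F u v - F x y - ((u - x) * dx x y + (v - y) * dy x y)) <= eps * sqrt (Rabs (u - x) ^ 2 + Rabs (v - y) ^ 2)) in Hd.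
    rewrite !pow2_abs in Hd. exact Hd.
Qed.

Lemma Cmod_le_sum c : Cmod c <= Rabs (Re c) + Rabs (Im c).
Proof.
  destruct c as [a b]. unfold Cmod; simpl.
  rewrite <- sqrt_Rsqr. 2:{ assert (0 <= Rabs a) by apply Rabs_pos. assert (0 <= Rabs b) by apply Rabs_pos. lra. }
  apply sqrt_le_1_alt. unfold Rsqr.
  assert (0 <= Rabs a * Rabs b) by (apply Rmult_le_pos; apply Rabs_pos).
  assert (Rabs a * Rabs a = a * a) by (rewrite <- Rabs_mult; apply Rabs_pos_eq; nra).
  assert (Rabs b * Rabs b = b * b) by (rewrite <- Rabs_mult; apply Rabs_pos_eq; nra).
  nra.
Qed.

Lemma Re_le_Cmod c : Rabs (Re c) <= Cmod c.
Proof. apply re_le_Cmod. Qed.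
Lemma Im_le_Cmod c : Rabs (Im c) <= Cmod c.
Proof.
  destruct c as [a b]. unfold Cmod; simpl.
  rewrite <- sqrt_Rsqr_abs. apply sqrt_le_1_alt. unfold Rsqr. nra.
Qed.

Lemma cont_expcos (x y : R) : continuous (fun u : R * R => exp (fst u) * cos (snd u)) (x, y).
Proof.
  apply (@continuous_mult (prod_UniformSpace R_UniformSpace R_UniformSpace) R_AbsRing (fun u => exp (fst u)) (fun u => cos (snd u))).
  - apply continuous_comp. apply continuous_fst. apply continuous_exp.
  - apply continuous_comp. apply continuous_snd. apply continuous_cos.
Qed.
Lemma cont_expsin (x y : R) : continuous (fun u : R * R => exp (fst u) * sin (snd u)) (x, y).
Proof.
  apply (@continuous_mult (prod_UniformSpace R_UniformSpace R_UniformSpace) R_AbsRing (fun u => exp (fst u)) (fun u => sin (snd u))).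
  - apply continuous_comp. apply continuous_fst. apply continuous_exp.
  - apply continuous_comp. apply continuous_snd. apply continuous_sin.
Qed.

Lemma isCD_Cexp z : isCD Cexp z (Cexp z).
Proof.
  apply isCD_of_eps. intros eps Heps.
  destruct z as [x y].
  assert (He2 : 0 < eps / 2) by lra.
  destruct (comp_filterdiff (fun u v => exp u * cos v) x y (fun u v => exp u * cos v) (fun u v => - (exp u * sin v)))
    with (eps := eps/2) as [d1 [Hd1 H1]]; auto.
  { intros u v. auto_derive; auto. ring. }
  { intros u v. auto_derive; auto. ring. }
  { apply cont_expcos. }
  destruct (comp_filterdiff (fun u v => exp u * sin v) x y (fun u v => exp u * sin v) (fun u v => (exp u * cos v)))
    with (eps := eps/2) as [d2 [Hd2 H2]]; auto.
  { intros u v. auto_derive; auto. ring. }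
  { intros u v. auto_derive; auto. ring. }
  { apply cont_expsin. }
  exists (Rmin d1 d2). split. apply Rmin_pos; auto.
  intros [u v] Hw.
  assert (Hu : Rabs (u - x) < Rmin d1 d2).
  { eapply Rle_lt_trans; [|exact Hw]. apply (Re_le_Cmod (Cminus (u,v) (x,y))). }
  assert (Hv : Rabs (v - y) < Rmin d1 d2).
  { eapply Rle_lt_trans; [|exact Hw]. apply (Im_le_Cmod (Cminus (u,v) (x,y))). }
  assert (Hm : Cmod (Cminus (u,v) (x,y)) = sqrt ((u-x)^2 + (v-y)^2)) by reflexivity.
  specialize (H1 u v (Rlt_le_trans _ _ _ Hu (Rmin_l _ _)) (Rlt_le_trans _ _ _ Hv (Rmin_l _ _))).
  specialize (H2 u v (Rlt_le_trans _ _ _ Hu (Rmin_r _ _)) (Rlt_le_trans _ _ _ Hv (Rmin_r _ _))).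
  eapply Rle_trans. apply Cmod_le_sum. rewrite Hm.
  unfold Cexp, Cminus, Cmult, Cplus, Copp. simpl.
  match goal with |- Rabs ?A + Rabs ?B <= _ =>
    replace A with (exp u * cos v - exp x * cos y - ((u - x) * (exp x * cos y) + (v - y) * - (exp x * sin y))) by ring;
    replace B with (exp u * sin v - exp x * sin y - ((u - x) * (exp x * sin y) + (v - y) * (exp x * cos y))) by ring
  end. replace ((u - x) * ((u - x) * 1) + (v - y) * ((v - y) * 1)) with ((u - x) ^ 2 + (v - y) ^ 2) by ring. lra.
Qed.

Definition D1 (U : C -> Prop) (g g1 : C -> C) := forall z, U z -> isCD g z (g1 z).
Definition D2 (U : C -> Prop) (g : C -> C) := exists g1 g2, D1 U g g1 /\ D1 U g1 g2.

Lemma isCD_opp f z a : isCD f z a -> isCD (fun w => Copp (f w)) z (Copp a).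
Proof. intros. apply (@is_derive_opp C_AbsRing (AbsRing_NormedModule C_AbsRing)); auto. Qed.

Lemma D1_plus U f g f1 g1 : D1 U f f1 -> D1 U g g1 -> D1 U (fun w => Cplus (f w) (g w)) (fun w => Cplus (f1 w) (g1 w)).
Proof. intros H1 H2 z Hz. apply isCD_plus; auto. Qed.
Lemma D1_mult U f g f1 g1 : D1 U f f1 -> D1 U g g1 ->
  D1 U (fun w => Cmult (f w) (g w)) (fun w => Cplus (Cmult (f1 w) (g w)) (Cmult (f w) (g1 w))).
Proof. intros H1 H2 z Hz. apply isCD_mult; auto. Qed.
Lemma D1_opp U f f1 : D1 U f f1 -> D1 U (fun w => Copp (f w)) (fun w => Copp (f1 w)).
Proof. intros H1 z Hz. apply isCD_opp; auto. Qed.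
Lemma D1_const U c : D1 U (fun _ => c) (fun _ => RtoC 0).
Proof. intros z _. apply isCD_const. Qed.
Lemma D1_inv U f f1 : D1 U f f1 -> (forall z, U z -> f z <> RtoC 0) ->
  D1 U (fun w => Cinv (f w)) (fun w => Copp (Cmult (f1 w) (Cinv (Cmult (f w) (f w))))).
Proof.
  intros H1 Hn z Hz. eapply isCD_eql. apply (isCD_comp Cinv f). apply isCD_inv; auto. auto.
  ring.
Qed.
Lemma D1_ext U f g f1 : (forall w, f w = g w) -> D1 U f f1 -> D1 U g f1.
Proof. intros E H z Hz. eapply isCD_ext; eauto. Qed.
Lemma D1_cexp U c : D1 U (fun w => Cexp (Cmult c w)) (fun w => Cmult c (Cexp (Cmult c w))).
Proof.
  intros z _. apply (isCD_comp Cexp (fun w => Cmult c w)). apply isCD_Cexp.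
  eapply isCD_eql. apply (isCD_mult (fun _ => c) (fun w => w)). apply isCD_const. apply isCD_id. ring.
Qed.

Lemma D2_plus U f g : D2 U f -> D2 U g -> D2 U (fun w => Cplus (f w) (g w)).
Proof.
  intros [f1 [f2 [A B]]] [g1 [g2 [C D]]].
  exists (fun w => Cplus (f1 w) (g1 w)), (fun w => Cplus (f2 w) (g2 w)).
  split; apply D1_plus; auto.
Qed.
Lemma D2_mult U f g : D2 U f -> D2 U g -> D2 U (fun w => Cmult (f w) (g w)).
Proof.
  intros [f1 [f2 [A B]]] [g1 [g2 [C D]]].
  exists (fun w => Cplus (Cmult (f1 w) (g w)) (Cmult (f w) (g1 w))).
  exists (fun w => Cplus (Cplus (Cmult (f2 w) (g w)) (Cmult (f1 w) (g1 w))) (Cplus (Cmult (f1 w) (g1 w)) (Cmult (f w) (g2 w)))).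
  split. apply D1_mult; auto.
  apply (D1_plus U (fun w => Cmult (f1 w) (g w)) (fun w => Cmult (f w) (g1 w))); apply D1_mult; auto.
Qed.
Lemma D2_const U c : D2 U (fun _ => c).
Proof. exists (fun _ => RtoC 0), (fun _ => RtoC 0). split; apply D1_const. Qed.
Lemma D2_ext U f g : (forall w, f w = g w) -> D2 U f -> D2 U g.
Proof. intros E [f1 [f2 [A B]]]. exists f1, f2. split; auto. eapply D1_ext; eauto. Qed.
Lemma D2_inv U f : D2 U f -> (forall z, U z -> f z <> RtoC 0) -> D2 U (fun w => Cinv (f w)).
Proof.
  intros [f1 [f2 [A B]]] Hn.
  exists (fun w => Copp (Cmult (f1 w) (Cinv (Cmult (f w) (f w))))).
  exists (fun w => Copp (Cplus (Cmult (f2 w) (Cinv (Cmult (f w) (f w))))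
     (Cmult (f1 w) (Copp (Cmult (Cplus (Cmult (f1 w) (f w)) (Cmult (f w) (f1 w)))
        (Cinv (Cmult (Cmult (f w) (f w)) (Cmult (f w) (f w))))))))).
  split. apply D1_inv; auto.
  apply (D1_opp U (fun w => Cmult (f1 w) (Cinv (Cmult (f w) (f w))))).
  apply (D1_mult U f1 (fun w => Cinv (Cmult (f w) (f w)))); auto.
  apply (D1_inv U (fun w => Cmult (f w) (f w))). apply D1_mult; auto.
  intros z Hz. apply Cmult_neq_0; auto.
Qed.
Lemma D2_cexp U c : D2 U (fun w => Cexp (Cmult c w)).
Proof.
  exists (fun w => Cmult c (Cexp (Cmult c w))).
  exists (fun w => Cplus (Cmult (RtoC 0) (Cexp (Cmult c w))) (Cmult c (Cmult c (Cexp (Cmult c w))))).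
  split. apply D1_cexp.
  apply (D1_mult U (fun _ => c) (fun w => Cexp (Cmult c w))). apply D1_const. apply D1_cexp.
Qed.
Lemma D2_pow U f n : D2 U f -> D2 U (fun w => pow_n (K := C_Ring) (f w) n).
Proof.
  intros H. induction n.
  - apply (D2_ext U (fun _ => RtoC 1)). reflexivity. apply D2_const.
  - apply (D2_ext U (fun w => Cmult (f w) (pow_n (K := C_Ring) (f w) n))). reflexivity.
    apply D2_mult; auto.
Qed.
Lemma D2_sum U (F : nat -> C -> C) N : (forall j, D2 U (F j)) -> D2 U (fun w => sum_n (fun j => F j w) N).
Proof.
  intros H. induction N.
  - apply (D2_ext U (F 0%nat)). intros w. rewrite sum_O. reflexivity. auto.
  - apply (D2_ext U (fun w => Cplus (sum_n (fun j => F j w) N) (F (S N) w))).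
    intros w. rewrite sum_Sn. reflexivity. apply D2_plus; auto.
Qed.

Lemma contR (f : R -> R) x : (forall eps, 0 < eps -> exists d, 0 < d /\ forall y, Rabs (y - x) < d -> Rabs (f y - f x) < eps) -> continuous f x.
Proof.
  intros H. apply continuity_pt_filterlim. intros eps Heps.
  destruct (H eps Heps) as [d [Hd Hy]]. exists d. split. lra.
  intros y [_ Hyd]. apply Hy. exact Hyd.
Qed.

Lemma Cmod_real_mult (h : R) d : Cmod (Cmult (RtoC h) d) = Rabs h * Cmod d.
Proof. rewrite Cmod_mult. f_equal. unfold Cmod, RtoC; simpl. rewrite <- sqrt_Rsqr_abs. f_equal. unfold Rsqr. ring. Qed.

Lemma lim_from (F : R -> R) x0 L : (forall eps, 0 < eps -> exists del : posreal, forall h, h <> 0 -> Rabs h < del ->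
  Rabs (F (x0 + h) - F x0 - h * L) <= eps * Rabs h) -> derivable_pt_lim F x0 L.
Proof.
  intros H eps Heps. destruct (H (eps/2)) as [del Hdel]. lra. exists del. intros h Hh Hhd.
  specialize (Hdel h Hh Hhd).
  assert (Hp : 0 < Rabs h) by (apply Rabs_pos_lt; auto).
  replace ((F (x0 + h) - F x0) / h - L) with ((F (x0 + h) - F x0 - h * L) / h) by (field; auto).
  unfold Rdiv. rewrite Rabs_mult, Rabs_inv.
  apply (Rmult_lt_reg_r (Rabs h)); auto. rewrite Rmult_assoc, Rinv_l, Rmult_1_r by lra. nra.
Qed.

Lemma dir_gen g z l (p : R -> C) x0 d : isCD g z l -> (forall s, p s = Cplus z (Cmult (RtoC (s - x0)) d)) ->
  is_derive (fun s => Re (g (p s))) x0 (Re (Cmult d l)) /\ is_derive (fun s => Im (g (p s))) x0 (Im (Cmult d l)).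
Proof.
  intros H Hp.
  assert (Hp0 : p x0 = z). { rewrite Hp. replace (x0 - x0) with 0 by ring. apply injective_projections; simpl; ring. }
  assert (key : forall eps, 0 < eps -> exists del : posreal, forall h, h <> 0 -> Rabs h < del ->
     Cmod (Cminus (Cminus (g (p (x0 + h))) (g z)) (Cmult (RtoC h) (Cmult d l))) <= eps * Rabs h).
  { intros eps Heps.
    assert (Hd1 : 0 < Cmod d + 1) by (generalize (Cmod_ge_0 d); lra).
    destruct (isCD_eps g z l H (eps / (Cmod d + 1))) as [de [Hde Hw]].
    { apply Rdiv_lt_0_compat; lra. }
    exists (mkposreal (de / (Cmod d + 1)) (Rdiv_lt_0_compat _ _ Hde Hd1)). simpl. intros h Hh Hhd.
    assert (Ew : Cminus (p (x0 + h)) z = Cmult (RtoC h) d).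
    { rewrite Hp. replace (x0 + h - x0) with h by ring. ring. }
    specialize (Hw (p (x0 + h))). rewrite Ew in Hw. rewrite Cmod_real_mult in Hw.
    replace (Cmult (RtoC h) (Cmult d l)) with (Cmult (Cmult (RtoC h) d) l) by ring.
    eapply Rle_trans. apply Hw.
    { apply Rle_lt_trans with (Rabs h * (Cmod d + 1)). apply Rmult_le_compat_l. apply Rabs_pos. lra.
      apply (Rmult_lt_reg_r (/ (Cmod d + 1))). apply Rinv_0_lt_compat; lra.
      rewrite Rmult_assoc, Rinv_r, Rmult_1_r by lra. exact Hhd. }
    idtac.
    replace (eps * Rabs h) with (eps/(Cmod d+1) * (Rabs h * (Cmod d + 1))) by (field; lra).
    apply Rmult_le_compat_l. apply Rlt_le, Rdiv_lt_0_compat; lra.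
    apply Rmult_le_compat_l. apply Rabs_pos. lra. }
  split; apply is_derive_Reals, lim_from; intros eps Heps; destruct (key eps Heps) as [del Hdel]; exists del;
  intros h Hh Hhd; cbv beta; rewrite Hp0; (eapply Rle_trans; [|apply (Hdel h Hh Hhd)]);
  [eapply Rle_trans; [|apply re_le_Cmod] | eapply Rle_trans; [|apply Im_le_Cmod]]; right; f_equal;
  destruct (g (p (x0 + h))) as [a1 a2]; destruct (g z) as [b1 b2]; destruct d as [d1 d2]; destruct l as [l1 l2];
  simpl; ring.
Qed.

Lemma dir_x g x y l : isCD g (x,y) l ->
  is_derive (fun s => Re (g (s,y))) x (Re l) /\ is_derive (fun s => Im (g (s,y))) x (Im l).
Proof.
  intros H. destruct (dir_gen g (x,y) l (fun s => (s,y)) x (RtoC 1) H) as [A B].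
  { intros s. apply injective_projections; simpl; ring. }
  rewrite Cmult_1_l in A, B. auto.
Qed.

Lemma dir_y g x y l : isCD g (x,y) l ->
  is_derive (fun s => Re (g (x,s))) y (- Im l) /\ is_derive (fun s => Im (g (x,s))) y (Re l).
Proof.
  intros H. destruct (dir_gen g (x,y) l (fun s => (x,s)) y Ci H) as [A B].
  { intros s. apply injective_projections; simpl; ring. }
  replace (Re (Cmult Ci l)) with (- Im l) in A by (destruct l; simpl; ring).
  replace (Im (Cmult Ci l)) with (Re l) in B by (destruct l; simpl; ring). auto.
Qed.

Lemma cont_eps f z l : isCD f z l -> forall eps, 0 < eps -> exists d, 0 < d /\
  forall w, Cmod (Cminus w z) < d -> Cmod (Cminus (f w) (f z)) < eps.
Proof.
  intros H eps Heps. destruct (isCD_eps f z l H 1 Rlt_0_1) as [d1 [Hd1 Hw]].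
  assert (Hl : 0 < 1 + Cmod l) by (generalize (Cmod_ge_0 l); lra).
  exists (Rmin d1 (eps / (2 * (1 + Cmod l)))). split.
  { apply Rmin_pos; auto. apply Rdiv_lt_0_compat; lra. }
  intros w Hwz.
  assert (A : Cmod (Cminus w z) < d1) by (eapply Rlt_le_trans; [apply Hwz|apply Rmin_l]).
  assert (B : Cmod (Cminus w z) < eps / (2 * (1 + Cmod l))) by (eapply Rlt_le_trans; [apply Hwz|apply Rmin_r]).
  specialize (Hw w A).
  assert (T := Cmod_triangle (Cminus (Cminus (f w) (f z)) (Cmult (Cminus w z) l)) (Cmult (Cminus w z) l)).
  replace (Cplus (Cminus (Cminus (f w) (f z)) (Cmult (Cminus w z) l)) (Cmult (Cminus w z) l))
    with (Cminus (f w) (f z)) in T by ring.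
  rewrite Cmod_mult in T.
  assert (0 <= Cmod (Cminus w z)) by apply Cmod_ge_0.
  assert (Cmod (Cminus w z) * (1 + Cmod l) < eps / 2).
  { apply (Rmult_lt_reg_r (/ (1 + Cmod l))). apply Rinv_0_lt_compat; lra.
    rewrite Rmult_assoc, Rinv_r, Rmult_1_r by lra.
    replace (eps / 2 * / (1 + Cmod l)) with (eps / (2 * (1 + Cmod l))) by (field; lra). auto. }
  nra.
Qed.

Lemma Cmod_pair_le v u t e : Cmod (Cminus (v,u) (t,e)) <= Rabs (v - t) + Rabs (u - e).
Proof. eapply Rle_trans. apply Cmod_le_sum. simpl. right. reflexivity. Qed.

Lemma aux_im a b : Rabs (- Im a - - Im b) <= Cmod (Cminus a b).
Proof. eapply Rle_trans; [|apply Im_le_Cmod]. right. rewrite <- Rabs_Ropp. destruct a, b. simpl. f_equal. ring. Qed.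

Lemma core_re g g1 g2 e0 del : 0 < del ->
  (forall z, Rabs (Im z - e0) < del -> isCD g z (g1 z) /\ isCD g1 z (g2 z)) ->
  (forall e, g (2 * PI, e) = g (0, e)) ->
  is_derive (fun e => RInt (fun t => Re (g (t, e))) 0 (2 * PI)) e0 0.
Proof.
  intros Hdel Hg Hper.
  assert (HD : forall t u, Rabs (u - e0) < del -> Derive (fun s => Re (g (t, s))) u = - Im (g1 (t,u))).
  { intros t u Hu. apply is_derive_unique. apply (dir_y g t u). apply Hg. simpl. auto. }
  assert (HDx : forall t u, Rabs (u - e0) < del -> Derive (fun s => - Im (g (s, u))) t = - Im (g1 (t,u))).
  { intros t u Hu. apply is_derive_unique. apply (@is_derive_opp R_AbsRing R_NormedModule).
    apply (dir_x g t u). apply Hg. simpl. auto. }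
  assert (He0 : forall t, Rabs (Im (t, e0) - e0) < del). { intros t. simpl. rewrite Rminus_diag, Rabs_R0. auto. }
  assert (Hpar := is_derive_RInt_param (fun u t => Re (g (t, u))) 0 (2 * PI) e0).
  assert (EL : RInt (fun t => Derive (fun u => Re (g (t,u))) e0) 0 (2*PI) = 0).
  { transitivity (RInt (Derive (fun s => - Im (g (s, e0)))) 0 (2 * PI)).
    + apply RInt_ext. intros t _. rewrite HD, HDx; auto; rewrite Rminus_diag, Rabs_R0; auto.
    + rewrite RInt_Derive; [rewrite Hper; apply Rminus_diag_eq; reflexivity| |].
      * intros t _. eexists. apply (@is_derive_opp R_AbsRing R_NormedModule). exact (proj2 (dir_x g t e0 _ (proj1 (Hg _ (He0 t))))).
      * intros t _. apply (continuous_ext (fun s => - Im (g1 (s, e0)))).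
        { intros s. symmetry. apply HDx. rewrite Rminus_diag, Rabs_R0; auto. }
        apply contR. intros eps Heps.
        destruct (cont_eps g1 (t, e0) (g2 (t,e0)) (proj2 (Hg (t,e0) (He0 t))) eps Heps) as [d [Hd Hc]].
        exists d. split; auto. intros y Hy.
        specialize (Hc (y, e0)). assert (Hcm := Cmod_pair_le y e0 t e0).
        rewrite Rminus_diag, Rabs_R0 in Hcm.
        eapply Rle_lt_trans; [|apply Hc; lra].
        apply aux_im. }
  cut (is_derive (fun e => RInt (fun t => Re (g (t, e))) 0 (2 * PI)) e0
     (RInt (fun t => Derive (fun u => Re (g (t,u))) e0) 0 (2*PI))).
  { intros HH. rewrite EL in HH. exact HH. }
  apply Hpar.
  - exists (mkposreal del Hdel). intros x Hx t _. change (Rabs (x - e0) < del) in Hx.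
    eexists. exact (proj1 (dir_y g t x _ (proj1 (Hg (t,x) Hx)))).
  - intros t _. intros [eps Heps].
    destruct (cont_eps g1 (t, e0) (g2 (t,e0)) (proj2 (Hg (t,e0) (He0 t))) eps Heps) as [d [Hd Hc]].
    assert (Hd2 : 0 < d/2) by lra.
    exists (mkposreal (Rmin del (d/2)) (Rmin_pos _ _ Hdel Hd2)). simpl.
    intros u v Hu Hv.
    assert (Hu1 : Rabs (u - e0) < del) by (eapply Rlt_le_trans; [apply Hu| apply Rmin_l]).
    assert (Hu2 : Rabs (u - e0) < d/2) by (eapply Rlt_le_trans; [apply Hu| apply Rmin_r]).
    assert (Hv2 : Rabs (v - t) < d/2) by (eapply Rlt_le_trans; [apply Hv| apply Rmin_r]).
    rewrite (HD v u Hu1), (HD t e0). 2:{ rewrite Rminus_diag, Rabs_R0; auto. }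
    specialize (Hc (v,u)). assert (Hcm := Cmod_pair_le v u t e0).
    eapply Rle_lt_trans; [|apply Hc; lra].
    apply aux_im.
  - exists (mkposreal del Hdel). intros x Hx. change (Rabs (x - e0) < del) in Hx.
    apply (@ex_RInt_continuous R_CompleteNormedModule). intros t _. apply (@ex_derive_continuous R_AbsRing R_NormedModule).
    eexists. exact (proj1 (dir_x g t x _ (proj1 (Hg (t,x) Hx)))).
Qed.

Lemma core_im g g1 g2 e0 del : 0 < del ->
  (forall z, Rabs (Im z - e0) < del -> isCD g z (g1 z) /\ isCD g1 z (g2 z)) ->
  (forall e, g (2 * PI, e) = g (0, e)) ->
  is_derive (fun e => RInt (fun t => Im (g (t, e))) 0 (2 * PI)) e0 0.
Proof.
  intros Hdel Hg Hper.
  set (m := Copp Ci).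
  assert (H := core_re (fun w => Cmult m (g w)) (fun w => Cmult m (g1 w)) (fun w => Cmult m (g2 w)) e0 del Hdel).
  eapply (@is_derive_ext R_AbsRing R_NormedModule); [|apply H].
  - intros e. apply RInt_ext. intros x _. unfold m. destruct (g (x, e)). simpl. ring.
  - intros z Hz. destruct (Hg z Hz) as [A B]. split.
    + eapply isCD_eql. apply (isCD_mult (fun _ => m) g). apply isCD_const. exact A. ring.
    + eapply isCD_eql. apply (isCD_mult (fun _ => m) g1). apply isCD_const. exact B. ring.
  - intros e. rewrite Hper. reflexivity.
Qed.

Lemma same_sign_eq (F : R -> R) : (forall e, e <> 0 -> is_derive F e 0) ->
  forall e1 e2, 0 < e1 * e2 -> F e1 = F e2.
Proof.
  intros HF.
  assert (K : forall e1 e2, e1 < e2 -> 0 < e1 * e2 -> F e1 = F e2).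
  { intros e1 e2 Hlt Hp. apply (@eq_is_derive R_NormedModule). 2: exact Hlt.
    intros t [H1 H2]. apply HF. intro E. subst t.
    destruct (Rlt_or_le 0 e1). lra. destruct (Rlt_or_le e2 0). lra. nra. }
  intros e1 e2 Hp. destruct (Rtotal_order e1 e2) as [Hl|[He|Hg]].
  - apply K; auto.
  - subst; auto.
  - symmetry. apply K; auto. lra.
Qed.

Lemma zero_of_small x C : 0 <= C -> (forall eps, 0 < eps -> Rabs x <= C * eps) -> x = 0.
Proof.
  intros HC H. destruct (Req_dec x 0) as [|Hx]; auto. exfalso.
  assert (Hax : 0 < Rabs x) by (apply Rabs_pos_lt; auto).
  specialize (H (Rabs x / (2 * (C + 1)))). 
  assert (Hp : 0 < Rabs x / (2 * (C + 1))) by (apply Rdiv_lt_0_compat; lra).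
  specialize (H Hp).
  assert (C * (Rabs x / (2 * (C + 1))) < Rabs x).
  { replace (C * (Rabs x / (2 * (C + 1)))) with (Rabs x * (C / (2 * (C+1)))) by (field; lra).
    assert (C / (2 * (C + 1)) < 1).
    { apply (Rmult_lt_reg_r (2 * (C+1))). lra. unfold Rdiv. rewrite Rmult_assoc, Rinv_l; lra. }
    assert (0 <= C / (2 * (C + 1))) by (apply Rle_mult_inv_pos; lra). nra. }
  lra.
Qed.

Lemma vanish g g1 g2 :
  (forall z, Im z <> 0 -> isCD g z (g1 z) /\ isCD g1 z (g2 z)) ->
  (forall e, g (2 * PI, e) = g (0, e)) ->
  (forall eps, 0 < eps -> exists M, 0 < M /\ forall t e, M <= Rabs e -> Cmod (g (t, e)) <= eps) ->
  forall e, e <> 0 ->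
  RInt (fun t => Re (g (t, e))) 0 (2 * PI) = 0 /\ RInt (fun t => Im (g (t, e))) 0 (2 * PI) = 0.
Proof.
  intros Hg Hper Hdec e He.
  assert (Hstrip : forall e0, e0 <> 0 -> forall z, Rabs (Im z - e0) < Rabs e0 -> isCD g z (g1 z) /\ isCD g1 z (g2 z)).
  { intros e0 He0 z Hz. apply Hg. intro E. rewrite E in Hz. rewrite Rminus_0_l, Rabs_Ropp in Hz. lra. }
  assert (HexR : forall e0, e0 <> 0 -> ex_RInt (fun t => Re (g (t, e0))) 0 (2 * PI)).
  { intros e0 He0. apply (@ex_RInt_continuous R_CompleteNormedModule). intros t _.
    apply (@ex_derive_continuous R_AbsRing R_NormedModule).
    eexists. exact (proj1 (dir_x g t e0 _ (proj1 (Hg (t,e0) He0)))). }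
  assert (HexI : forall e0, e0 <> 0 -> ex_RInt (fun t => Im (g (t, e0))) 0 (2 * PI)).
  { intros e0 He0. apply (@ex_RInt_continuous R_CompleteNormedModule). intros t _.
    apply (@ex_derive_continuous R_AbsRing R_NormedModule).
    eexists. exact (proj2 (dir_x g t e0 _ (proj1 (Hg (t,e0) He0)))). }
  assert (HdR : forall e0, e0 <> 0 -> is_derive (fun e => RInt (fun t => Re (g (t, e))) 0 (2 * PI)) e0 0).
  { intros e0 He0. apply (core_re g g1 g2 e0 (Rabs e0)). apply Rabs_pos_lt; auto. apply Hstrip; auto. auto. }
  assert (HdI : forall e0, e0 <> 0 -> is_derive (fun e => RInt (fun t => Im (g (t, e))) 0 (2 * PI)) e0 0).
  { intros e0 He0. apply (core_im g g1 g2 e0 (Rabs e0)). apply Rabs_pos_lt; auto. apply Hstrip; auto. auto. }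
  assert (Hae : 0 < Rabs e) by (apply Rabs_pos_lt; auto).
  assert (HPI : 0 < PI) by apply PI_RGT_0.
  split; apply (zero_of_small _ (2 * PI - 0)); try lra; intros eps Heps;
  destruct (Hdec eps Heps) as [M [HM HMb]];
  set (m := e * ((Rabs e + M) / Rabs e));
  assert (Hme : 0 < e * m) by (unfold m; replace (e * (e * ((Rabs e + M) / Rabs e))) with ((e * e) * ((Rabs e + M) / Rabs e)) by ring;
     apply Rmult_lt_0_compat; [ nra | apply Rdiv_lt_0_compat; lra]);
  assert (Hm : M <= Rabs m) by (unfold m; rewrite Rabs_mult, Rabs_div, (Rabs_pos_eq (Rabs e + M)), Rabs_Rabsolu by lra;
     replace (Rabs e * ((Rabs e + M) / Rabs e)) with (Rabs e + M) by (field; lra); lra);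
  assert (Hm0 : m <> 0) by (intro E; rewrite E in Hme; lra).
  - rewrite (same_sign_eq (fun e => RInt (fun t => Re (g (t, e))) 0 (2 * PI)) HdR e m Hme).
    apply abs_RInt_le_const. lra. apply HexR; auto.
    intros t _. eapply Rle_trans. apply re_le_Cmod. apply HMb; auto.
  - rewrite (same_sign_eq (fun e => RInt (fun t => Im (g (t, e))) 0 (2 * PI)) HdI e m Hme).
    apply abs_RInt_le_const. lra. apply HexI; auto.
    intros t _. eapply Rle_trans. apply Im_le_Cmod. apply HMb; auto.
Qed.

Lemma ccos_E w : ccos w = Cmult (RtoC (1/2)) (Cplus (Cexp (Cmult Ci w)) (Cexp (Cmult (Copp Ci) w))).
Proof.
  destruct w as [x y].
  replace (Cmult Ci (x,y)) with ((-y, x) : C) by (apply injective_projections; simpl; ring).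
  replace (Cmult (Copp Ci) (x,y)) with ((y, -x) : C) by (apply injective_projections; simpl; ring).
  unfold ccos, Cexp, cosh, sinh. simpl. rewrite cos_neg, sin_neg.
  apply injective_projections; simpl; field.
Qed.

Lemma csin_E w : csin w = Cmult (0, -1/2) (Cminus (Cexp (Cmult Ci w)) (Cexp (Cmult (Copp Ci) w))).
Proof.
  destruct w as [x y].
  replace (Cmult Ci (x,y)) with ((-y, x) : C) by (apply injective_projections; simpl; ring).
  replace (Cmult (Copp Ci) (x,y)) with ((y, -x) : C) by (apply injective_projections; simpl; ring).
  unfold csin, Cexp, cosh, sinh. simpl. rewrite cos_neg, sin_neg.
  apply injective_projections; simpl; field.
Qed.

Lemma D2_ccos U c : D2 U (fun w => ccos (Cmult c w)).
Proof.
  apply (D2_ext U (fun w => Cmult (RtoC (1/2)) (Cplus (Cexp (Cmult (Cmult Ci c) w)) (Cexp (Cmult (Cmult (Copp Ci) c) w))))).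
  { intros w. rewrite ccos_E. rewrite !Cmult_assoc. reflexivity. }
  apply D2_mult. apply D2_const. apply D2_plus; apply D2_cexp.
Qed.

Lemma D2_csin U c : D2 U (fun w => csin (Cmult c w)).
Proof.
  apply (D2_ext U (fun w => Cmult (0, -1/2) (Cplus (Cexp (Cmult (Cmult Ci c) w)) (Cmult (RtoC (-1)) (Cexp (Cmult (Cmult (Copp Ci) c) w)))))).
  { intros w. rewrite csin_E. rewrite !Cmult_assoc. f_equal. unfold Cminus. f_equal. ring. }
  apply D2_mult. apply D2_const. apply D2_plus. apply D2_cexp. apply D2_mult. apply D2_const. apply D2_cexp.
Qed.

Lemma D2_trig U N a b : D2 U (trig_eval N a b).
Proof.
  unfold trig_eval.
  apply (D2_sum U (fun j z => Cplus (Cmult (RtoC (a j)) (ccos (Cmult (RtoC (INR j)) z)))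
                        (Cmult (RtoC (b j)) (csin (Cmult (RtoC (INR j)) z))))). intros j. cbv beta.
  apply (D2_plus U (fun z => Cmult (RtoC (a j)) (ccos (Cmult (RtoC (INR j)) z))) (fun z => Cmult (RtoC (b j)) (csin (Cmult (RtoC (INR j)) z)))).
  - apply (D2_mult U (fun _ => RtoC (a j)) (fun z => ccos (Cmult (RtoC (INR j)) z))). apply D2_const. apply D2_ccos.
  - apply (D2_mult U (fun _ => RtoC (b j)) (fun z => csin (Cmult (RtoC (INR j)) z))). apply D2_const. apply D2_csin.
Qed.

Lemma ccos_per (j : nat) e : ccos (Cmult (RtoC (INR j)) (2 * PI, e)) = ccos (Cmult (RtoC (INR j)) (0, e)).
Proof.
  unfold ccos.
  replace (Re (Cmult (RtoC (INR j)) (2 * PI, e))) with (Re (Cmult (RtoC (INR j)) (0, e)) + 2 * INR j * PI) by (simpl; ring).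
  replace (Im (Cmult (RtoC (INR j)) (2 * PI, e))) with (Im (Cmult (RtoC (INR j)) (0, e))) by (simpl; ring).
  rewrite cos_period, sin_period. reflexivity.
Qed.
Lemma csin_per (j : nat) e : csin (Cmult (RtoC (INR j)) (2 * PI, e)) = csin (Cmult (RtoC (INR j)) (0, e)).
Proof.
  unfold csin.
  replace (Re (Cmult (RtoC (INR j)) (2 * PI, e))) with (Re (Cmult (RtoC (INR j)) (0, e)) + 2 * INR j * PI) by (simpl; ring).
  replace (Im (Cmult (RtoC (INR j)) (2 * PI, e))) with (Im (Cmult (RtoC (INR j)) (0, e))) by (simpl; ring).
  rewrite cos_period, sin_period. reflexivity.
Qed.

Lemma trig_per N a b e : trig_eval N a b (2 * PI, e) = trig_eval N a b (0, e).
Proof.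
  unfold trig_eval. apply sum_n_ext. intros j. rewrite ccos_per. rewrite csin_per. reflexivity.
Qed.

Lemma exp_le x y : x <= y -> exp x <= exp y.
Proof. intros [H|H]. left. apply exp_increasing; auto. subst; lra. Qed.

Lemma cosh_pos y : 0 < cosh y.
Proof. unfold cosh. assert (0 < exp y) by apply exp_pos. assert (0 < exp (-y)) by apply exp_pos. lra. Qed.

Lemma cosh_sinh_abs y : cosh y + Rabs (sinh y) = exp (Rabs y) /\ (exp (Rabs y) - 1) / 2 <= Rabs (sinh y).
Proof.
  unfold cosh, sinh. destruct (Rle_or_lt 0 y) as [Hy|Hy].
  - rewrite (Rabs_pos_eq y Hy).
    assert (exp (-y) <= exp y) by (apply exp_le; lra).
    assert (exp (-y) <= 1) by (rewrite <- exp_0; apply exp_le; lra).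
    rewrite Rabs_pos_eq by lra. split; lra.
  - rewrite (Rabs_left y Hy).
    assert (exp y <= exp (-y)) by (apply exp_le; lra).
    assert (exp y <= 1) by (rewrite <- exp_0; apply exp_le; lra).
    rewrite Rabs_left1 by lra. split; lra.
Qed.

Definition tterm (a b : nat -> R) (j : nat) (z : C) : C :=
  Cplus (Cmult (RtoC (a j)) (ccos (Cmult (RtoC (INR j)) z))) (Cmult (RtoC (b j)) (csin (Cmult (RtoC (INR j)) z))).

Lemma tterm_re a b j t e : Re (tterm a b j (t,e)) =
  cosh (INR j * e) * (a j * cos (INR j * t) + b j * sin (INR j * t)).
Proof.
  unfold tterm, ccos, csin. simpl.
  replace (INR j * t - 0 * e) with (INR j * t) by ring. replace (INR j * e + 0 * t) with (INR j * e) by ring. ring.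
Qed.
Lemma tterm_im a b j t e : Im (tterm a b j (t,e)) =
  sinh (INR j * e) * (b j * cos (INR j * t) - a j * sin (INR j * t)).
Proof.
  unfold tterm, ccos, csin. simpl.
  replace (INR j * t - 0 * e) with (INR j * t) by ring. replace (INR j * e + 0 * t) with (INR j * e) by ring. ring.
Qed.

Lemma lin_bound (a b p q : R) : Rabs p <= 1 -> Rabs q <= 1 -> Rabs (a * p + b * q) <= Rabs a + Rabs b.
Proof.
  intros Hp Hq. eapply Rle_trans. apply Rabs_triang. rewrite !Rabs_mult.
  assert (0 <= Rabs a) by apply Rabs_pos. assert (0 <= Rabs b) by apply Rabs_pos.
  assert (Rabs a * Rabs p <= Rabs a) by nra. assert (Rabs b * Rabs q <= Rabs b) by nra. lra.
Qed.

Lemma abs_cos x : Rabs (cos x) <= 1.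
Proof. destruct (COS_bound x). apply Rabs_le. lra. Qed.
Lemma abs_sin x : Rabs (sin x) <= 1.
Proof. destruct (SIN_bound x). apply Rabs_le. lra. Qed.

Lemma tterm_upper a b j t e : Cmod (tterm a b j (t,e)) <= (Rabs (a j) + Rabs (b j)) * exp (INR j * Rabs e).
Proof.
  eapply Rle_trans. apply Cmod_le_sum. rewrite tterm_re, tterm_im, !Rabs_mult.
  assert (H1 : Rabs (a j * cos (INR j * t) + b j * sin (INR j * t)) <= Rabs (a j) + Rabs (b j)).
  { apply lin_bound. apply abs_cos. apply abs_sin. }
  assert (H2 : Rabs (b j * cos (INR j * t) - a j * sin (INR j * t)) <= Rabs (a j) + Rabs (b j)).
  { unfold Rminus. replace (- (a j * sin (INR j * t))) with (a j * - sin (INR j * t)) by ring.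
    rewrite Rplus_comm. eapply Rle_trans. apply lin_bound. rewrite Rabs_Ropp.
    apply abs_sin. apply abs_cos. lra. }
  destruct (cosh_sinh_abs (INR j * e)) as [E _].
  rewrite Rabs_mult, (Rabs_pos_eq (INR j)) in E by apply pos_INR.
  rewrite <- E. rewrite (Rabs_pos_eq (cosh _)) by (apply Rlt_le, cosh_pos).
  assert (0 <= cosh (INR j * e)) by (apply Rlt_le, cosh_pos).
  assert (0 <= Rabs (sinh (INR j * e))) by apply Rabs_pos.
  assert (0 <= Rabs (a j * cos (INR j * t) + b j * sin (INR j * t))) by apply Rabs_pos.
  assert (0 <= Rabs (b j * cos (INR j * t) - a j * sin (INR j * t))) by apply Rabs_pos.
  nra.
Qed.

Lemma tterm_lower a b j t e : Rabs (sinh (INR j * e)) * sqrt (a j ^ 2 + b j ^ 2) <= Cmod (tterm a b j (t,e)).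
Proof.
  unfold Cmod. fold (Re (tterm a b j (t, e))) (Im (tterm a b j (t, e))).
  rewrite tterm_re, tterm_im.
  rewrite <- (sqrt_Rsqr (Rabs _)) by apply Rabs_pos. rewrite <- sqrt_mult_alt.
  2:{ apply Rle_0_sqr. }
  apply sqrt_le_1_alt.
  set (y := INR j * e). set (x := INR j * t).
  assert (Hc : cosh y ^ 2 = 1 + sinh y ^ 2).
  { assert (exp y * exp (-y) = 1) by (rewrite <- exp_plus, Rplus_opp_r, exp_0; auto).
    unfold cosh, sinh. simpl. nra. }
  assert (Hs := sin2_cos2 x). unfold Rsqr in Hs.
  rewrite <- Rsqr_abs. unfold Rsqr.
  set (P := a j * cos x + b j * sin x). set (Q := b j * cos x - a j * sin x).
  assert (HPQ : P ^ 2 + Q ^ 2 = a j ^ 2 + b j ^ 2).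
  { unfold P, Q. replace (a j ^ 2 + b j ^ 2) with ((a j ^ 2 + b j ^ 2) * (sin x * sin x + cos x * cos x)) by (rewrite Hs; ring). ring. }
  assert (E : (cosh y * P)^2 + (sinh y * Q)^2 = sinh y ^2 * (P^2+Q^2) + P^2).
  { replace ((cosh y * P)^2) with (cosh y ^2 * P^2) by ring. rewrite Hc. ring. }
  rewrite E.
  rewrite HPQ. assert (0 <= P ^ 2) by apply pow2_ge_0. simpl. nra.
Qed.

Lemma Cmod_sum (F : nat -> C) N : Cmod (sum_n F N) <= sum_n (fun j => Cmod (F j)) N.
Proof.
  induction N.
  - rewrite !sum_O. lra.
  - rewrite !sum_Sn. eapply Rle_trans. apply Cmod_triangle. change (plus ?x ?y) with (x + y). lra.
Qed.

Lemma sum_mono (f g : nat -> R) N : (forall j, f j <= g j) -> sum_n f N <= sum_n g N.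
Proof.
  intros H. induction N.
  - rewrite !sum_O. auto.
  - rewrite !sum_Sn. change (plus ?x ?y) with (x + y). specialize (H (S N)). lra.
Qed.

Lemma sum_nonneg (f : nat -> R) N : (forall j, 0 <= f j) -> 0 <= sum_n f N.
Proof.
  intros H. induction N.
  - rewrite sum_O. auto.
  - rewrite sum_Sn. change (plus ?x ?y) with (x + y). specialize (H (S N)). lra.
Qed.

Lemma sum_bound (w : nat -> R) N y : (forall j, 0 <= w j) -> 0 <= y ->
  sum_n (fun j => w j * exp (INR j * y)) N <= sum_n w N * exp (INR N * y).
Proof.
  intros Hw Hy. induction N.
  - rewrite !sum_O. lra.
  - rewrite !sum_Sn. change (plus ?x ?y) with (x + y).
    assert (exp (INR N * y) <= exp (INR (S N) * y)) by (apply exp_le; rewrite S_INR; nra).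
    assert (0 <= sum_n w N) by (apply sum_nonneg; auto).
    specialize (Hw (S N)). nra.
Qed.

Lemma trig_tterm N a b z : trig_eval N a b z = sum_n (fun j => tterm a b j z) N.
Proof. reflexivity. Qed.

Lemma trig_upper N a b t e :
  Cmod (trig_eval N a b (t,e)) <= sum_n (fun j => Rabs (a j) + Rabs (b j)) N * exp (INR N * Rabs e).
Proof.
  rewrite trig_tterm. eapply Rle_trans. apply Cmod_sum.
  eapply Rle_trans. apply sum_mono. intros j. apply tterm_upper.
  apply sum_bound. intros j. generalize (Rabs_pos (a j)) (Rabs_pos (b j)); lra. apply Rabs_pos.
Qed.

Lemma decay a b c d k' : (a (S k') <> 0 \/ b (S k') <> 0) -> c (S k') = 0 -> d (S k') = 0 ->
  forall eps, 0 < eps -> exists M, 0 < M /\ forall t e, M <= Rabs e ->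
  Cmod (Cdiv (trig_eval (S k') c d (t,e)) (trig_eval (S k') a b (t,e))) <= eps.
Proof.
  intros Hab Hc Hd eps Heps.
  set (A := sum_n (fun j => Rabs (c j) + Rabs (d j)) k').
  set (B := sum_n (fun j => Rabs (a j) + Rabs (b j)) k').
  set (c0 := sqrt (a (S k') ^ 2 + b (S k') ^ 2)).
  assert (HA : 0 <= A) by (apply sum_nonneg; intros j; generalize (Rabs_pos (c j)) (Rabs_pos (d j)); lra).
  assert (HB : 0 <= B) by (apply sum_nonneg; intros j; generalize (Rabs_pos (a j)) (Rabs_pos (b j)); lra).
  assert (Hc0 : 0 < c0).
  { apply sqrt_lt_R0. destruct Hab as [H|H].
    - assert (0 < a (S k') ^ 2) by (apply pow2_gt_0; auto). generalize (pow2_ge_0 (b (S k'))). lra.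
    - assert (0 < b (S k') ^ 2) by (apply pow2_gt_0; auto). generalize (pow2_ge_0 (a (S k'))). lra. }
  exists (2 / c0 * (A / eps + 1 + B + c0 / 2)). split.
  { apply Rmult_lt_0_compat. apply Rdiv_lt_0_compat; lra.
    assert (0 <= A / eps) by (apply Rle_mult_inv_pos; lra). lra. }
  intros t e He.
  set (Y := exp (INR k' * Rabs e)). set (X := exp (Rabs e)).
  assert (HY : 1 <= Y). { unfold Y. rewrite <- exp_0. apply exp_le. generalize (pos_INR k') (Rabs_pos e); nra. }
  assert (HX : 1 + Rabs e <= X) by apply exp_ineq1_le.
  assert (HS : Cmod (trig_eval (S k') c d (t,e)) <= A * Y).
  { rewrite trig_tterm, sum_Sn. eapply Rle_trans. apply Cmod_triangle.
    assert (H0 : Cmod (tterm c d (S k') (t,e)) <= 0).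
    { eapply Rle_trans. apply tterm_upper. rewrite Hc, Hd, Rabs_R0. lra. }
    rewrite <- trig_tterm. generalize (trig_upper k' c d t e). fold A. fold Y. lra. }
  assert (HT : Y * (c0 * X / 2 - c0 / 2 - B) <= Cmod (trig_eval (S k') a b (t,e))).
  { rewrite trig_tterm, sum_Sn.
    assert (H1 := Cmod_minus_tri (tterm a b (S k') (t,e)) (Cplus (sum_n (fun j => tterm a b j (t,e)) k') (tterm a b (S k') (t,e)))).
    replace (Cminus (tterm a b (S k') (t, e)) (Cplus (sum_n (fun j : nat => tterm a b j (t, e)) k') (tterm a b (S k') (t, e))))
      with (Copp (sum_n (fun j : nat => tterm a b j (t, e)) k')) in H1 by ring.
    rewrite Cmod_opp in H1. rewrite <- trig_tterm in H1.
    assert (H2 := trig_upper k' a b t e). fold B in H2. fold Y in H2.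
    assert (H3 := tterm_lower a b (S k') t e). fold c0 in H3.
    destruct (cosh_sinh_abs (INR (S k') * e)) as [_ H4].
    set (sv := Rabs (sinh (INR (S k') * e))) in H3, H4.
    rewrite Rabs_mult, (Rabs_pos_eq (INR (S k'))) in H4 by apply pos_INR.
    rewrite S_INR, Rmult_plus_distr_r, Rmult_1_l, exp_plus in H4. fold Y X in H4.
    change (plus ?x ?y) with (Cplus x y).
    assert ((Y * X - 1) / 2 * c0 <= sv * c0) by (apply Rmult_le_compat_r; lra).
    rewrite <- trig_tterm. assert (c0 / 2 <= Y * (c0/2)) by nra. nra. }
  assert (HL : A / eps + 1 <= c0 * X / 2 - c0 / 2 - B).
  { assert (2 / c0 * (A / eps + 1 + B + c0 / 2) * c0 = 2 * (A / eps + 1 + B + c0 / 2)) by (field; lra).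
    assert (c0 * (1 + Rabs e) <= c0 * X) by (apply Rmult_le_compat_l; lra).
    assert (2 / c0 * (A / eps + 1 + B + c0 / 2) * c0 <= Rabs e * c0) by (apply Rmult_le_compat_r; lra).
    nra. }
  assert (HAe : 0 <= A / eps) by (apply Rle_mult_inv_pos; lra).
  assert (HTpos : 0 < Cmod (trig_eval (S k') a b (t,e))).
  { eapply Rlt_le_trans; [|exact HT]. apply Rmult_lt_0_compat; lra. }
  rewrite Cmod_div. 2:{ intro E. rewrite E, Cmod_0 in HTpos. lra. }
  apply (Rmult_le_reg_r (Cmod (trig_eval (S k') a b (t,e)))); auto.
  unfold Rdiv. rewrite Rmult_assoc, Rinv_l, Rmult_1_r by lra.
  apply Rle_trans with (A * Y); auto.
  apply Rle_trans with (eps * (Y * (c0 * X / 2 - c0 / 2 - B))).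
  2:{ apply Rmult_le_compat_l; lra. }
  assert (A <= eps * (c0 * X / 2 - c0 / 2 - B)).
  { assert (eps * (A / eps + 1) = A + eps) by (field; lra).
    assert (eps * (A / eps + 1) <= eps * (c0 * X / 2 - c0 / 2 - B)) by (apply Rmult_le_compat_l; lra). lra. }
  nra.
Qed.

Lemma pow_n_Cpow (x : C) n : pow_n (K := C_Ring) x n = Cpow x n.
Proof. induction n; simpl; auto. Qed.

Lemma pow_le_self x n : 0 <= x <= 1 -> (1 <= n)%nat -> x ^ n <= x.
Proof.
  intros [H0 H1] Hn. destruct n. lia. simpl.
  assert (x ^ n <= 1). { clear Hn. induction n; simpl; nra. } nra.
Qed.

Lemma filt_zero (F : R -> C) : (forall eta, 0 < eta -> F eta = RtoC 0) ->
  filterlim F (at_right 0) (locally (RtoC 0)).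
Proof.
  intros H. apply (filterlim_ext_loc (fun _ => RtoC 0)).
  - exists (mkposreal 1 Rlt_0_1). intros y _ Hy. symmetry. apply H. auto.
  - apply filterlim_const.
Qed.

Theorem lemma6 (a b c d : nat -> R) (k n : nat) :
  is_trig_deg a b k ->
  (forall j, (k <= j)%nat -> c j = 0 /\ d j = 0) ->
  (forall z : C, trig_eval k a b z = RtoC 0 -> Im z = 0) ->
  (1 <= n)%nat ->
  let r := fun z : C => Cdiv (trig_eval k c d z) (trig_eval k a b z) in
  exists Lp Lm : C,
    filterlim (fun eta => CRInt (fun phi => pow_n (r (phi, eta)) n) 0 (2 * PI))
      (at_right 0) (locally Lp) /\
    filterlim (fun eta => CRInt (fun phi => pow_n (r (phi, - eta)) n) 0 (2 * PI))
      (at_right 0) (locally Lm) /\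
    Cplus (Cmult (RtoC (1/2)) Lp) (Cmult (RtoC (1/2)) Lm) = RtoC 0.
Proof.
  intros Hdeg Hcd Hroots Hn r.
  set (g := fun z => pow_n (K := C_Ring) (r z) n).
  assert (Key : forall e, e <> 0 -> CRInt (fun phi => g (phi, e)) 0 (2 * PI) = RtoC 0).
  { destruct k as [|k'].
    - (* degree 0: s = 0 *)
      intros e _.
      assert (Hg : forall z, g z = RtoC 0).
      { intros z. unfold g, r. destruct (Hcd 0%nat (le_n 0)) as [E1 E2].
        assert (N0 : forall w, Cplus (Cmult (RtoC 0) (ccos w)) (Cmult (RtoC 0) (csin w)) = RtoC 0) by (intros; ring).
        unfold trig_eval. rewrite !sum_O. rewrite E1, E2, N0.
        destruct n. lia. simpl. change (mult ?x ?y) with (Cmult x y). unfold Cdiv. rewrite !Cmult_0_l. reflexivity. }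
      unfold CRInt. rewrite (RInt_ext _ (fun _ => 0)), (RInt_ext (fun x => Im (g (x, e))) (fun _ => 0)).
      + rewrite RInt_const. unfold scal; simpl. unfold mult; simpl. apply injective_projections; simpl; ring.
      + intros x _. rewrite Hg. reflexivity.
      + intros x _. rewrite Hg. reflexivity.
    - set (U := fun z => trig_eval (S k') a b z <> RtoC 0).
      assert (HD : D2 U g).
      { unfold g. apply D2_pow. unfold r.
        apply (D2_ext U (fun w => Cmult (trig_eval (S k') c d w) (Cinv (trig_eval (S k') a b w)))).
        { intros w. reflexivity. }
        apply D2_mult. apply D2_trig. apply D2_inv. apply D2_trig. unfold U. auto. }
      destruct HD as [g1 [g2 [H1 H2]]].
      intros e He.
      destruct (vanish g g1 g2) with (e := e) as [VR VI]; auto.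
      + intros z Hz. assert (Uz : U z). { intro E. apply Hz. apply Hroots. exact E. }
        split; [apply H1|apply H2]; auto.
      + intros e0. unfold g, r. rewrite !trig_per. reflexivity.
      + intros eps Heps. destruct Hdeg as [Hab _]. destruct (Hcd (S k') (le_n _)) as [Hc Hd].
        destruct (decay a b c d k' Hab Hc Hd (Rmin eps 1)) as [M [HM HMb]].
        { apply Rmin_pos; lra. }
        exists M. split; auto. intros t e1 He1.
        specialize (HMb t e1 He1).
        unfold g. rewrite pow_n_Cpow, Cmod_pow.
        assert (0 <= Cmod (r (t, e1))) by apply Cmod_ge_0.
        eapply Rle_trans. apply pow_le_self; auto. split; auto.
        eapply Rle_trans. apply HMb. apply Rmin_r.
        eapply Rle_trans. apply HMb. apply Rmin_l.
      + unfold CRInt. rewrite VR, VI. reflexivity. }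
  exists (RtoC 0), (RtoC 0). split; [|split].
  - apply filt_zero. intros eta Heta. apply Key. lra.
  - apply filt_zero. intros eta Heta. apply Key. lra.
  - ring.
Qed.
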